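(* Let $G\le\mathrm{Aut}(\mathcal{T}_d)$ be a persistent, finite-state self-similar group. If the Röver–Nekrashevych group $V_d(G)$ is finitely generated, then so is $G$.
   Context: Let $X=\{1,\dots,d\}$ ($d\ge2$) with its usual order; $X^*$ is the vertex set of the rooted $d$-ary tree $\mathcal{T}_d$, ordered lexicographically. Every $f\in\mathrm{Aut}(\mathcal{T}_d)$ has a wreath recursion $f=\rho(f)(f_1,\dots,f_d)$ with $\rho(f)\in S_d$, $f_i$ determined by $f(iw)=\rho(f)(i)f_i(w)$; the states of $f$ form the smallest set containing $f$ and closed under $f\mapsto f_i$. $G$ is self-similar if it contains all states of its elements; finite-state if each element has finitely many states; persistent if there is $i$ such that $g_i=g$ for every $g\in G$. With $X^\omega$ the infinite words, for finite complete rooted subtrees $T_-,T_+$ with $n$ leaves $u_1,\dots,u_n$, $v_1,\dots,v_n$ (lexicographic order), $\sigma\in S_n$, $g_i\in G$, $[T_-,\sigma(g_1,\dots,g_n),T_+]$ is the homeomorphism of $X^\omega$ with $v_iw\mapsto u_{\sigma(i)}g_i(w)$; $V_d(G)$ is the group of all these. *)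

(* Defs.v *)
From mathcomp Require Import all_boot all_fingroup.
Set Implicit Arguments. Unset Strict Implicit. Unset Printing Implicit Defensive.

(* Alphabet X = {1,...,d} is modelled by 'I_d (its usual order = order of 'I_d).
   Finite words X^* : seq 'I_d.   Infinite words X^omega : nat -> 'I_d. *)

Definition word d := seq 'I_d.
Definition iword d := nat -> 'I_d.
Definition tmap d := word d -> word d.

Definition is_aut d (f : tmap d) : Prop :=
  bijective f /\ (forall w, size (f w) = size w) /\
  (forall w n, f (take n w) = take n (f w)).

(* Section (state) of f at vertex v:  f (v w) = f(v) f_v(w). *)
Definition section d (f : tmap d) (v : word d) : tmap d :=
  fun w => drop (size v) (f (v ++ w)).

Definition is_subgroup_aut d (G : tmap d -> Prop) : Prop :=
  (forall g, G g -> is_aut g) /\ G id /\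
  (forall g h, G g -> G h -> G (g \o h)) /\
  (forall g, G g -> exists h, [/\ G h, cancel g h & cancel h g]).

Definition finite_state d (f : tmap d) : Prop :=
  exists (n : nat) (st : nat -> tmap d),
    forall v : word d, exists k, k < n /\ forall w, section f v w = st k w.

Definition self_similar d (G : tmap d -> Prop) : Prop :=
  forall g v, G g -> G (section g v).

Definition finite_state_group d (G : tmap d -> Prop) : Prop :=
  forall g, G g -> finite_state g.

Definition persistent d (G : tmap d -> Prop) : Prop :=
  exists i : 'I_d, forall g, G g -> forall w, section g [:: i] w = g w.

(* Leaves (in lexicographic order) of a finite complete rooted subtree:
   start from the root and repeatedly replace a leaf v by its d children
   v1,...,vd (this keeps the leaves lexicographically sorted). *)
Inductive leafset d : seq (word d) -> Prop :=
| leafset_root : leafset [:: [::]]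
| leafset_expand L1 v L2 : leafset (L1 ++ v :: L2) ->
    leafset (L1 ++ [seq rcons v x | x <- enum 'I_d] ++ L2).

Definition icat d (v : word d) (w : iword d) : iword d :=
  fun k => if k < size v then nth (w k) v k else w (k - size v).

Definition iact d (g : tmap d) (w : iword d) : iword d :=
  fun k => nth (w k) (g (mkseq w k.+1)) k.

(* The Roever-Nekrashevych group V_d(G): all maps [T_-, sigma(g_1..g_n), T_+]
   sending v_i w to u_{sigma(i)} g_i(w). *)
Definition in_V d (G : tmap d -> Prop) (F : iword d -> iword d) : Prop :=
  exists (n : nat) (U Vs : seq (word d)) (sigma : 'S_n) (gs : 'I_n -> tmap d),
    leafset U /\ leafset Vs /\ size U = n /\ size Vs = n /\
        (forall i, G (gs i)) /\
        forall (i : 'I_n) (w : iword d),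
          F (icat (nth [::] Vs i) w) = icat (nth [::] U (sigma i)) (iact (gs i) w).

Inductive gen (A : Type) (n : nat) (s : nat -> A -> A) : (A -> A) -> Prop :=
| gen_id : gen n s id
| gen_mul k g : k < n -> gen n s g -> gen n s (s k \o g)
| gen_inv k h g : k < n -> cancel (s k) h -> cancel h (s k) ->
    gen n s g -> gen n s (h \o g).

Definition fin_gen (A : Type) (H : (A -> A) -> Prop) : Prop :=
  exists (n : nat) (s : nat -> A -> A),
    (forall k, k < n -> H (s k)) /\
    forall f, H f -> exists f', gen n s f' /\ forall x, f' x = f x.

(* Main.v *)
Require Import Defs.
From mathcomp Require Import all_boot all_fingroup.
From Stdlib Require Import FunctionalExtensionality Classical.
From Stdlib Require List.
Set Implicit Arguments. Unset Strict Implicit. Unset Printing Implicit Defensive.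

Lemma mkseq_icat d (b : word d) (y : iword d) m :
  mkseq (icat b y) m = take m b ++ mkseq y (m - size b).
Proof.
apply: (@eq_from_nth _ (y 0)).
  rewrite size_mkseq size_cat size_take size_mkseq.
  by case: ltnP => h; [rewrite (eqP (ltnW h)) addn0 | rewrite subnKC].
move=> k; rewrite size_mkseq => km.
rewrite nth_mkseq // /icat nth_cat size_take.
case: (ltnP m (size b)) => hm.
  rewrite km nth_take // (ltn_trans km hm); apply: set_nth_default; exact: ltn_trans hm.
case: ltnP => kb.
  by rewrite nth_take //; apply: set_nth_default.
by rewrite nth_mkseq // ltn_sub2rE.
Qed.

Lemma iw_eq d (a b : iword d) K :
  (forall m, K <= m -> mkseq a m = mkseq b m) -> a = b.
Proof.
move=> H; apply: functional_extensionality => k.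
have := f_equal (fun s => nth (a k) s k) (H (maxn K k.+1) (leq_maxl _ _)).
by rewrite !nth_mkseq // leq_max ltnSn orbT.
Qed.

Lemma icat_nil d (z : iword d) : icat [::] z = z.
Proof. by apply: (@iw_eq _ _ _ 0) => m _; rewrite mkseq_icat subn0. Qed.

Lemma icat_cat d (p r : word d) z : icat p (icat r z) = icat (p ++ r) z.
Proof.
apply: (@iw_eq _ _ _ (size (p ++ r))) => m hm.
rewrite !mkseq_icat size_cat in hm *.
have h1 : size p <= m by apply: leq_trans hm; rewrite leq_addr.
have h2 : size r <= m - size p by rewrite leq_subRL.
by rewrite (take_oversize h1) (take_oversize h2) take_oversize ?size_cat // catA subnDA.
Qed.

Lemma icat_shift d (z : iword d) k : icat (mkseq z k) (fun j => z (j + k)) = z.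
Proof.
apply: functional_extensionality => j; rewrite /icat size_mkseq.
by case: ltnP => h; [rewrite nth_mkseq | rewrite subnK].
Qed.

Lemma prefix_of d (a b : word d) x y :
  icat a x = icat b y -> size b <= size a -> a = b ++ mkseq y (size a - size b).
Proof.
move=> E h; have := f_equal (fun z => mkseq z (size a)) E.
by rewrite /= !mkseq_icat subnn cats0 !take_oversize.
Qed.

Definition pa d (f : tmap d) :=
  (forall w, size (f w) = size w) /\ (forall n w, f (take n w) = take n (f w)).

Lemma pa_cat d (f : tmap d) v w : pa f -> f (v ++ w) = f v ++ section f v w.
Proof.
move=> [_ Hp]; rewrite /section.
have -> : f v = take (size v) (f (v ++ w)) by rewrite -Hp take_size_cat.
by rewrite cat_take_drop.
Qed.

Lemma pa_section d (f : tmap d) v : pa f -> pa (section f v).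
Proof.
move=> [Hs Hp]; split.
  by move=> w; rewrite /section size_drop Hs size_cat addKn.
move=> n w; rewrite /section.
have -> : v ++ take n w = take (size v + n) (v ++ w).
  by rewrite take_cat ltnNge leq_addr /= addKn.
by rewrite Hp take_drop addnC.
Qed.

Lemma pa_id d : pa (@id (word d)).
Proof. by []. Qed.

Lemma pa_comp d (f g : tmap d) : pa f -> pa g -> pa (f \o g).
Proof.
move=> [Fs Fp] [Gs Gp]; split; first by move=> w /=; rewrite Fs Gs.
by move=> n w /=; rewrite Gp Fp.
Qed.

Lemma pa_inv d (a h : tmap d) : pa a -> cancel a h -> cancel h a -> pa h.
Proof.
move=> [As Ap] ah ha; split; first by move=> w; rewrite -As ha.
move=> n w; apply: (can_inj ah).
by rewrite ha Ap ha.
Qed.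

Lemma section_nil d (f : tmap d) : section f [::] = f.
Proof. by apply: functional_extensionality => w; rewrite /section drop0. Qed.

Lemma section_id d v : section (@id (word d)) v = id.
Proof. by apply: functional_extensionality => w; rewrite /section drop_size_cat. Qed.

Lemma section_section d (f : tmap d) v v' :
  section (section f v) v' = section f (v ++ v').
Proof.
apply: functional_extensionality => w.
by rewrite /section drop_drop size_cat addnC catA.
Qed.

Lemma section_comp d (f g : tmap d) v : pa f -> pa g ->
  section (f \o g) v = section f (g v) \o section g v.
Proof.
move=> pf pg; apply: functional_extensionality => w.
rewrite {1}/section /= (pa_cat _ _ pg) (pa_cat _ _ pf) drop_size_cat //.
by case: pf => Fs _; case: pg => Gs _; rewrite Fs Gs.
Qed.

Lemma section_inv d (a h : tmap d) u : pa a -> cancel a h -> cancel h a ->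
  cancel (section a (h u)) (section h u) /\ cancel (section h u) (section a (h u)).
Proof.
move=> pa_ ah ha; have ph := pa_inv pa_ ah ha.
have sz : forall f : tmap d, pa f -> forall w, size (f w) = size w by move=> f [Hs _].
split=> w.
  have E : h (u ++ section a (h u) w) = h u ++ w.
    have : a (h u ++ w) = u ++ section a (h u) w by rewrite (pa_cat _ _ pa_) ha.
    by move <-; rewrite ah.
  move: E; rewrite (pa_cat _ _ ph) => /eqP; rewrite eqseq_cat // => /andP[_ /eqP H]; exact: H.
have E : a (h u ++ section h u w) = u ++ w.
  by rewrite -(pa_cat _ _ ph) ha.
move: E; rewrite (pa_cat _ _ pa_) => /eqP; rewrite eqseq_cat ?ha ?sz // => /andP[_ /eqP H]; exact: H.
Qed.

Lemma mkseq_iact d (g : tmap d) w m : pa g -> mkseq (iact g w) m = g (mkseq w m).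
Proof.
move=> [Gs Gp]; apply: (@eq_from_nth _ (w 0)); first by rewrite Gs !size_mkseq.
move=> k; rewrite size_mkseq => km; rewrite nth_mkseq // /iact.
have -> : mkseq w k.+1 = take k.+1 (mkseq w m).
  apply: (@eq_from_nth _ (w 0)); first by rewrite size_takel ?size_mkseq.
  move=> j; rewrite size_mkseq => jk; rewrite nth_take // !nth_mkseq //.
  exact: leq_trans km.
rewrite Gp nth_take //; apply: set_nth_default; by rewrite Gs size_mkseq.
Qed.

Lemma iact_comp d (f g : tmap d) z : pa f -> pa g ->
  iact f (iact g z) = iact (f \o g) z.
Proof.
move=> pf pg; apply: (@iw_eq _ _ _ 0) => m _.
by rewrite !mkseq_iact //; apply: pa_comp.
Qed.

Lemma iact_id d (z : iword d) : iact id z = z.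
Proof. by apply: (@iw_eq _ _ _ 0) => m _; rewrite mkseq_iact. Qed.

Lemma iact_icat d (h : tmap d) r z : pa h ->
  iact h (icat r z) = icat (h r) (iact (section h r) z).
Proof.
move=> ph; apply: (@iw_eq _ _ _ (size r)) => m hm.
have Hs : size (h r) = size r by case: ph.
rewrite mkseq_iact // !mkseq_icat mkseq_iact; last exact: pa_section.
by rewrite Hs !take_oversize ?Hs // pa_cat.
Qed.

Definition goodH d (H : tmap d -> Prop) :=
  [/\ (forall h, H h -> pa h), H id,
      (forall f g, H f -> H g -> H (f \o g)),
      (forall h v, H h -> H (section h v)) &
      (forall h, H h -> exists h', [/\ H h', cancel h h' & cancel h' h])].

Definition Inv d (H : tmap d -> Prop) (F : iword d -> iword d) :=
  forall w, exists p u h z0, [/\ H h, w = icat p z0 &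
     forall z, F (icat p z) = icat u (iact h z)].

Lemma Inv_id d (H : tmap d -> Prop) : goodH H -> Inv H id.
Proof.
case=> _ Hid _ _ _ w; exists [::], [::], id, w; split=> //.
  by rewrite icat_nil.
by move=> z; rewrite !icat_nil iact_id.
Qed.

Lemma Inv_inv d (H : tmap d -> Prop) F Fi : goodH H -> Inv H F ->
  cancel F Fi -> cancel Fi F -> Inv H Fi.
Proof.
case=> Hpa _ _ _ Hinv IF c1 c2 w.
have [p [u [h [z0 [Hh Ex EF]]]]] := IF (Fi w).
have [h' [Hh' hh' h'h]] := Hinv h Hh.
exists u, p, h', (iact h z0); split=> //.
  by rewrite -EF -Ex c2.
move=> y.
have -> : icat u y = F (icat p (iact h' y)).
  rewrite EF iact_comp; try exact: Hpa.
  have -> : h \o h' = id by apply: functional_extensionality => x /=; rewrite h'h.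
  by rewrite iact_id.
by rewrite c1.
Qed.

Lemma Inv_comp d (H : tmap d -> Prop) F F' : goodH H -> Inv H F -> Inv H F' ->
  Inv H (F \o F').
Proof.
case=> Hpa _ Hcomp Hsec _ IF IF' w.
have [p1 [u1 [h1 [z0 [Hh1 Ew EF']]]]] := IF' w.
have [p2 [u2 [h2 [y0 [Hh2 Ew' EF]]]]] := IF (F' w).
set r := mkseq z0 (size p2).
set z1 := fun j => z0 (j + size p2).
have Ez0 : z0 = icat r z1 by rewrite icat_shift.
have key : forall z, F' (icat (p1 ++ r) z) =
    icat (u1 ++ h1 r) (iact (section h1 r) z).
  by move=> z; rewrite -icat_cat EF' iact_icat ?icat_cat //; apply: Hpa.
have Ew2 : w = icat (p1 ++ r) z1 by rewrite Ew Ez0 icat_cat.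
have Hsz : size p2 <= size (u1 ++ h1 r).
  have [Hs _] := Hpa _ Hh1.
  by rewrite size_cat Hs size_mkseq leq_addl.
have Eq := prefix_of (esym (etrans (esym Ew') (etrans (f_equal F' Ew2) (key z1)))) Hsz.
set q := mkseq y0 _ in Eq.
exists (p1 ++ r), (u2 ++ h2 q), (section h2 q \o section h1 r), z1; split=> //.
  by apply: Hcomp; apply: Hsec.
move=> z /=.
rewrite key Eq -icat_cat EF iact_icat; last exact: Hpa.
rewrite icat_cat iact_comp //; by apply: Hpa; apply: Hsec.
Qed.

Lemma leaf_cover d (L : seq (word d)) : leafset L ->
  forall w, exists v z, v \in L /\ w = icat v z.
Proof.
elim=> [|L1 v L2 _ IH] w.
  by exists [::], w; rewrite icat_nil inE.
have [v' [z [Hv Ew]]] := IH w.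
move: Hv; rewrite mem_cat inE => /orP[H1|/orP[/eqP Ev|H2]].
- by exists v', z; rewrite mem_cat H1.
- subst v'.
  exists (rcons v (z 0)), (fun j => z (j + 1)); split.
    by rewrite !mem_cat (map_f (fun x => rcons v x)) ?mem_enum ?orbT.
  rewrite Ew -cats1 -icat_cat; congr icat.
  by rewrite -[in LHS](icat_shift z 1).
- by exists v', z; rewrite !mem_cat H2 !orbT.
Qed.

Lemma Inv_V d (H : tmap d -> Prop) F n (U Vs : seq (word d)) (sigma : 'S_n)
  (gs : 'I_n -> tmap d) : leafset Vs -> size Vs = n -> (forall i, H (gs i)) ->
  (forall (i : 'I_n) (w : iword d),
    F (icat (nth [::] Vs i) w) = icat (nth [::] U (sigma i)) (iact (gs i) w)) ->
  Inv H F.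
Proof.
move=> LV sV Hg EF w.
have [v [z [Hv Ew]]] := leaf_cover LV w.
have hi : index v Vs < n by rewrite -sV index_mem.
exists v, (nth [::] U (sigma (Ordinal hi))), (gs (Ordinal hi)), z; split=> //.
by move=> y; rewrite -EF /= nth_index.
Qed.


Lemma aut_pa d (g : tmap d) : is_aut g -> pa g.
Proof. by case=> _ [Hs Hp]. Qed.

Lemma gen_one d N (s : nat -> tmap d) k : k < N -> gen N s (s k).
Proof. by move=> hk; apply: (gen_mul hk (gen_id N s)). Qed.

Lemma gen_comp d N (s : nat -> tmap d) f g :
  gen N s f -> gen N s g -> gen N s (f \o g).
Proof.
elim=> [//|k f' hk _ IH|k h f' hk c1 c2 _ IH] Hg.
  exact: gen_mul hk (IH Hg).
exact: gen_inv hk c1 c2 (IH Hg).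
Qed.

Lemma gen_pa d (G : tmap d -> Prop) N (s : nat -> tmap d) :
  is_subgroup_aut G -> (forall k, k < N -> G (s k)) ->
  forall e, gen N s e -> pa e.
Proof.
case=> Gaut [_ [_ _]] Gs.
move=> e; elim=> [|k f hk _ IH|k h f hk c1 c2 _ IH]; first exact: pa_id.
  by apply: pa_comp IH; apply: aut_pa; apply: Gaut; apply: Gs.
apply: pa_comp IH; apply: (pa_inv _ c1 c2).
by apply: aut_pa; apply: Gaut; apply: Gs.
Qed.

Lemma gen_inv_ex d (G : tmap d -> Prop) N (s : nat -> tmap d) :
  is_subgroup_aut G -> (forall k, k < N -> G (s k)) ->
  forall e, gen N s e -> exists e', [/\ gen N s e', cancel e e' & cancel e' e].
Proof.
case=> Gaut [_ [_ Ginv]] Gs.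
move=> e; elim=> [|k f hk _ [f' [Hf' c1 c2]]|k h f hk c1 c2 _ [f' [Hf' c3 c4]]].
- by exists id; split=> //; apply: gen_id.
- have [h [_ ch1 ch2]] := Ginv _ (Gs _ hk).
  exists (f' \o h); split.
  + apply: gen_comp Hf' _; exact: (gen_inv hk ch1 ch2 (gen_id N s)).
  + by move=> x /=; rewrite ch1 c1.
  + by move=> x /=; rewrite c2 ch2.
- exists (f' \o s k); split.
  + by apply: gen_comp Hf' _; apply: gen_one.
  + by move=> x /=; rewrite c2 c3.
  + by move=> x /=; rewrite c4 c1.
Qed.

Lemma gen_sec d (G : tmap d -> Prop) N (s : nat -> tmap d) :
  is_subgroup_aut G -> (forall k, k < N -> G (s k)) ->
  (forall k u, k < N -> exists j, j < N /\ section (s k) u = s j) ->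
  forall e, gen N s e -> forall v, gen N s (section e v).
Proof.
move=> SG Gs Hcl.
have Hpa := gen_pa SG Gs.
have pk : forall k, k < N -> pa (s k).
  by move=> k hk; apply: Hpa; apply: gen_one.
move=> e; elim=> [|k f hk Hf IH|k h f hk c1 c2 Hf IH] v.
- by rewrite section_id; apply: gen_id.
- rewrite section_comp; [|exact: pk|exact: Hpa].
  have [j [hj ->]] := Hcl k (f v) hk.
  exact: gen_mul hj (IH v).
- have ph : pa h by apply: (pa_inv (pk k hk) c1 c2).
  rewrite section_comp; [|exact: ph|exact: Hpa].
  have [j [hj Ej]] := Hcl k (h (f v)) hk.
  have [e1 e2] := section_inv (f v) (pk k hk) c1 c2.
  rewrite Ej in e1 e2.
  exact: gen_inv hj e1 e2 (IH v).
Qed.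

Definition closedP d (G : tmap d -> Prop) (P : list (tmap d)) :=
  forall e, List.In e P -> exists g v, [/\ G g, e = section g v &
    forall v', List.In (section g v') P].

Definition covers d (P : list (tmap d)) g := forall v, List.In (section g v) P.

Lemma closedP_app d (G : tmap d -> Prop) P Q :
  closedP G P -> closedP G Q -> closedP G (P ++ Q).
Proof.
move=> CP CQ e /List.in_app_iff [/CP|/CQ] [g [v [Gg Ee Hv]]];
  exists g, v; split=> // v'; apply/List.in_app_iff; by [left|right].
Qed.

Lemma coversl d (P Q : list (tmap d)) g : covers P g -> covers (P ++ Q) g.
Proof. by move=> C v; apply/List.in_app_iff; left. Qed.

Lemma coversr d (P Q : list (tmap d)) g : covers Q g -> covers (P ++ Q) g.
Proof. by move=> C v; apply/List.in_app_iff; right. Qed.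

Lemma single d (G : tmap d -> Prop) g : G g -> finite_state g ->
  exists L, closedP G L /\ covers L g.
Proof.
move=> Gg [n0 [st Hst]].
have Hst' : forall v, exists k, k < n0 /\ section g v = st k.
  move=> v; have [k [hk E]] := Hst v.
  by exists k; split=> //; apply: functional_extensionality.
have : forall m, exists L, (forall e, List.In e L -> exists v, e = section g v) /\
    forall v k, k < m -> section g v = st k -> List.In (section g v) L.
  elim=> [|m [L [H1 H2]]]; first by exists nil.
  case: (classic (exists v0, section g v0 = st m)) => [[v0 E0]|NE].
    exists (section g v0 :: L); split.
      by move=> e [<-|/H1]; [exists v0|].
    move=> v k; rewrite ltnS leq_eqVlt => /orP[/eqP->|hk] E.
      by left; rewrite E E0.
    by right; apply: (H2 v k).
  exists L; split=> // v k; rewrite ltnS leq_eqVlt => /orP[/eqP->|hk] E.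
    by case: NE; exists v.
  exact: (H2 v k).
case/(_ n0) => L [H1 H2]; exists L; split.
  move=> e /H1 [v ->]; exists g, v; split=> // v'.
  by have [k [hk E]] := Hst' v'; apply: (H2 v' k).
by move=> v; have [k [hk E]] := Hst' v; apply: (H2 v k).
Qed.

Lemma multi d (G : tmap d -> Prop) n (gs : 'I_n -> tmap d) :
  (forall i, G (gs i)) -> (forall i, finite_state (gs i)) ->
  exists L, closedP G L /\ forall i, covers L (gs i).
Proof.
move=> HG HF.
have : forall m, exists L, closedP G L /\ forall i : 'I_n, i < m -> covers L (gs i).
  elim=> [|m [L [C1 C2]]]; first by exists nil; split=> // e [].
  case: (ltnP m n) => hm.
    have [L' [C1' C2']] := single (HG (Ordinal hm)) (HF (Ordinal hm)).
    exists (L ++ L'); split; first exact: closedP_app.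
    move=> i; rewrite ltnS leq_eqVlt => /orP[/eqP Ei|hi].
      by apply: coversr; have -> : i = Ordinal hm by apply: val_inj.
    by apply: coversl; apply: C2.
  exists L; split=> // i hi; apply: C2.
  by apply: leq_trans (ltn_ord i) hm.
by case/(_ n) => L [C1 C2]; exists L; split=> // i; apply: C2.
Qed.

Definition Vw d (G : tmap d -> Prop) (P : list (tmap d)) (F : iword d -> iword d) :=
  exists n (U Vs : seq (word d)) (sigma : 'S_n) (gs : 'I_n -> tmap d),
    [/\ leafset Vs, size Vs = n, (forall i, G (gs i)),
       (forall (i : 'I_n) (w : iword d),
          F (icat (nth [::] Vs i) w) = icat (nth [::] U (sigma i)) (iact (gs i) w))
     & forall i, covers P (gs i)].

Lemma Vw_l d (G : tmap d -> Prop) P Q F : Vw G P F -> Vw G (P ++ Q) F.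
Proof.
case=> n [U [Vs [sg [gs [A B C D E]]]]].
by exists n, U, Vs, sg, gs; split=> // i; apply: coversl.
Qed.

Lemma Vw_r d (G : tmap d -> Prop) P Q F : Vw G Q F -> Vw G (P ++ Q) F.
Proof.
case=> n [U [Vs [sg [gs [A B C D E]]]]].
by exists n, U, Vs, sg, gs; split=> // i; apply: coversr.
Qed.

Lemma Vall d (G : tmap d -> Prop) nV (sV : nat -> iword d -> iword d) :
  finite_state_group G -> (forall k, k < nV -> in_V G (sV k)) ->
  exists P, closedP G P /\ forall a, a < nV -> Vw G P (sV a).
Proof.
move=> FS HV.
have : forall m, m <= nV -> exists P, closedP G P /\ forall a, a < m -> Vw G P (sV a).
  elim=> [|m IH] hm; first by exists nil; split=> // e [].
  have [P [C1 C2]] := IH (ltnW hm).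
  have [n [U [Vs [sg [gs [_ [LV [_ [sVs [Gg EF]]]]]]]]]] := HV m hm.
  have [L [CL HL]] := multi Gg (fun i => FS _ (Gg i)).
  exists (P ++ L); split; first exact: closedP_app.
  move=> a; rewrite ltnS leq_eqVlt => /orP[/eqP->|ha].
    by apply: Vw_r; exists n, U, Vs, sg, gs; split.
  by apply: Vw_l; apply: C2.
by case/(_ nV (leqnn _)) => P [C1 C2]; exists P.
Qed.

Lemma inP d (P : list (tmap d)) e : List.In e P ->
  exists j, j < length P /\ List.nth j P id = e.
Proof.
by move=> /(List.In_nth _ _ id) [j [/ltP hj E]]; exists j.
Qed.

Lemma no_shift d (a b : word d) (g h : tmap d) (x y : 'I_d) :
  (forall z, icat a (iact g z) = icat b (iact h z)) -> size a < size b ->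
  pa g -> injective g -> x != y -> False.
Proof.
move=> E hab pg ig /negP; apply.
have K : forall z : iword d, a ++ g [:: z 0] = take (size a).+1 b.
  move=> z; have := f_equal (fun t => mkseq t (size a).+1) (E z).
  rewrite /= !mkseq_icat take_oversize // subSn // subnn mkseq_iact //.
  have -> : (size a).+1 - size b = 0 by apply/eqP; rewrite subn_eq0.
  by rewrite /= cats0.
have := etrans (K (fun _ => x)) (esym (K (fun _ => y))).
by move=> /eqP; rewrite eqseq_cat // => /andP[_ /eqP /ig [->]] //.
Qed.

Lemma section_nseq d (G : tmap d -> Prop) (i0 : 'I_d) f k :
  (forall g, G g -> forall w, section g [:: i0] w = g w) -> G f ->
  section f (nseq k i0) = f.
Proof.
move=> Hp Gf; elim: k => [|k IH]; first exact: section_nil.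
have -> : nseq k.+1 i0 = [:: i0] ++ nseq k i0 by [].
rewrite -section_section.
have -> : section f [:: i0] = f by apply: functional_extensionality; apply: Hp.
exact: IH.
Qed.

Theorem lemma5p7 (d : nat) (G : tmap d -> Prop) :
  1 < d ->
  is_subgroup_aut G -> self_similar G -> persistent G -> finite_state_group G ->
  fin_gen (in_V G) -> fin_gen G.
Proof.
move=> d1 SG SS [i0 Hper] FS [nV [sV [HsV Hgen]]].
have [P [CP VP]] := Vall FS HsV.
set N := length P; set s := fun j => List.nth j P id.
have Gs : forall k, k < N -> G (s k).
  move=> k /ltP hk; have := List.nth_In P id hk.
  by case/CP => g [v [Gg Ee _]]; rewrite /s Ee; apply: SS.
have Hcl : forall k u, k < N -> exists j, j < N /\ section (s k) u = s j.
  move=> k u /ltP hk; have := List.nth_In P id hk.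
  case/CP => g [v [Gg Ee Hv]].
  have [j [hj Ej]] := inP (Hv (v ++ u)).
  by exists j; split=> //; rewrite /s Ee section_section Ej.
have GH : goodH (gen N s).
  split.
  - exact: gen_pa SG Gs.
  - exact: gen_id.
  - by move=> f g; apply: gen_comp.
  - by move=> h v Hh; apply: gen_sec SG Gs Hcl h Hh v.
  - exact: gen_inv_ex SG Gs.
have IV : forall a, a < nV -> Inv (gen N s) (sV a).
  move=> a ha; have [n [U [Vs [sg [gs [LV sVs Gg EF Cv]]]]]] := VP a ha.
  apply: (Inv_V LV sVs _ EF) => i.
  have := Cv i [::]; rewrite section_nil => /inP [j [hj Ej]].
  by rewrite -Ej; apply: gen_one.
have IG : forall f', gen nV sV f' -> Inv (gen N s) f'.
  move=> f'; elim=> [|k g hk _ IH|k h g hk c1 c2 _ IH].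
  - exact: Inv_id.
  - exact: Inv_comp GH (IV k hk) IH.
  - exact: Inv_comp GH (Inv_inv GH (IV k hk) c1 c2) IH.
exists N, s; split=> // f Gf.
have pf : pa f by apply: aut_pa; case: SG => Ga _; apply: Ga.
have inj_f : injective f.
  by case: SG => Ga _; case: (Ga f Gf) => [[fi c1 _] _]; apply: can_inj c1.
have VF : in_V G (iact f).
  exists 1, [:: [::]], [:: [::]], 1%g, (fun _ => f).
  do 4 (split; first by [|apply: leafset_root]).
  split=> // i w.
  have E1 : forall j : 'I_1, nth [::] [:: [::]] j = [::] :> word d by case=> [[]].
  by rewrite !E1 !icat_nil.
have [f' [Gf' Ef']] := Hgen _ VF.
have Ef : f' = iact f by apply: functional_extensionality.
have IF := IG _ Gf'; rewrite Ef in IF.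
have [p [u [h [z0 [Hh Ew EF]]]]] := IF (fun _ => i0).
have Ep : p = nseq (size p) i0.
  have := f_equal (fun t => mkseq t (size p)) Ew.
  rewrite /= mkseq_icat take_oversize // subnn /= cats0 => <-.
  by apply: (@eq_from_nth _ i0); rewrite ?size_mkseq ?size_nseq // => k hk;
    rewrite nth_mkseq // nth_nseq hk.
have E2 : forall z, icat (f p) (iact f z) = icat u (iact h z).
  have Sp : section f p = f by rewrite Ep (section_nseq _ Hper Gf).
  by move=> z; rewrite -EF iact_icat // Sp.
have ph : pa h by case: GH => Hpa _ _ _ _; apply: Hpa.
have inj_h : injective h.
  by case: GH => _ _ _ _ Hinv; have [h' [_ c1 _]] := Hinv h Hh; apply: can_inj c1.
have Hsz : size (f p) = size p by case: pf.
have x01 : (Ordinal (ltnW d1) : 'I_d) != Ordinal d1 by [].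
case: (ltngtP (size (f p)) (size u)) => hs.
- by case: (no_shift E2 hs pf inj_f x01).
- by case: (no_shift (fun z => esym (E2 z)) hs ph inj_h x01).
have Hfh : forall z, iact f z = iact h z.
  move=> z; apply: (@iw_eq _ _ _ 0) => m _.
  have := f_equal (fun t => mkseq t (m + size u)) (E2 z).
  rewrite /= !mkseq_icat !take_oversize ?hs ?leq_addl // !addnK.
  by move=> /eqP; rewrite eqseq_cat // => /andP[_ /eqP].
have -> : f = h.
  apply: functional_extensionality => w.
  have := congr1 (fun t : iword d => mkseq t (size w)) (Hfh (nth i0 w)).
  by rewrite (@mkseq_iact d f (nth i0 w) (size w) pf) (@mkseq_iact d h (nth i0 w) (size w) ph) mkseq_nth.
by exists h.
Qed.
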